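(* Let $\mathbf A\in\mathbb C^{n\times n}$ with $\operatorname{Ind}\mathbf A=k$ and $\operatorname{rank}\mathbf A^{k+1}=\operatorname{rank}\mathbf A^{k}=r\le n$. Then $\mathbf A\mathbf A^{D}=(q_{ij})$ satisfies, for all $i,j=1,\dots,n$, \[q_{ij}=\frac{\sum_{\alpha\in I_{r,n}\{j\}}\left|\left(\mathbf A^{k+1}_{j.}(\mathbf a^{(k+1)}_{i.})\right)^{\alpha}_{\alpha}\right|}{\sum_{\alpha\in I_{r,n}}\left|(\mathbf A^{k+1})^{\alpha}_{\alpha}\right|},\] where $\mathbf a^{(k+1)}_{i.}$ is the $i$-th row of $\mathbf A^{k+1}$.
   Context: $\operatorname{Ind}\mathbf A$ is the smallest nonnegative $k$ with $\operatorname{rank}\mathbf A^{k+1}=\operatorname{rank}\mathbf A^{k}$; the Drazin inverse $\mathbf A^{D}$ is the unique $\mathbf X$ with $\mathbf A^{k+1}\mathbf X=\mathbf A^{k}$, $\mathbf X\mathbf A\mathbf X=\mathbf X$, $\mathbf A\mathbf X=\mathbf X\mathbf A$. $\mathbf M_{j.}(\mathbf c)$ denotes $\mathbf M$ with its $j$-th row replaced by the row vector $\mathbf c$. $I_{r,n}$ is the set of strictly increasing sequences of $r$ elements of $\{1,\dots,n\}$, $I_{r,n}\{j\}=\{\alpha\in I_{r,n}:j\in\alpha\}$, $\mathbf M^{\alpha}_{\alpha}$ is the principal submatrix indexed by $\alpha$, $|\cdot|$ is the determinant. *)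

(* Defs.v *)
From HB Require Import structures.
From mathcomp Require Import all_boot all_order all_algebra.
Set Implicit Arguments. Unset Strict Implicit. Unset Printing Implicit Defensive.
Import Order.TTheory GRing.Theory Num.Theory.
Local Open Scope ring_scope.

Definition is_index (F : fieldType) (n : nat) (A : 'M[F]_n) (k : nat) : Prop :=
  \rank (A ^+ k.+1) = \rank (A ^+ k) /\
  (forall j : nat, (j < k)%N -> \rank (A ^+ j.+1) <> \rank (A ^+ j)).

Definition is_drazin_inverse (F : fieldType) (n : nat) (A X : 'M[F]_n) : Prop :=
  exists k : nat, is_index A k /\
    A ^+ k.+1 *m X = A ^+ k /\ X *m A *m X = X /\ A *m X = X *m A.

Definition row_repl (F : fieldType) (n : nat) (M : 'M[F]_n) (j : 'I_n)
  (c : 'rV[F]_n) : 'M[F]_n :=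
  \matrix_(a < n, b < n) (if a == j then c 0 b else M a b).

(* |M^alpha_alpha| : principal minor of M indexed by the set alpha
   (rows/columns taken in increasing order, as enum of 'I_n is sorted). *)
Definition pminor (F : fieldType) (n : nat) (M : 'M[F]_n) (alpha : {set 'I_n}) : F :=
  \det (mxsub (@enum_val _ (mem alpha)) (@enum_val _ (mem alpha)) M).

(* Main.v *)
Require Import Defs.
From HB Require Import structures.
From mathcomp Require Import all_boot all_order all_algebra fingroup perm.
From mathcomp Require Import ring.
Set Implicit Arguments. Unset Strict Implicit. Unset Printing Implicit Defensive.
Import Order.TTheory GRing.Theory Num.Theory.
Local Open Scope ring_scope.

Section CB.
Variable F : fieldType.

Lemma det_mul_ffun r m (Y : 'M[F]_(r,m)) (X : 'M[F]_(m,r)) :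
  \det (Y *m X) = \sum_(f : {ffun 'I_r -> 'I_m}) (\prod_a Y a (f a)) * \det (rowsub f X).
Proof.
rewrite /determinant.
transitivity (\sum_(s : 'S_r) \sum_(f : {ffun 'I_r -> 'I_m})
   (-1) ^+ s * ((\prod_a Y a (f a)) * \prod_a X (f a) (s a))).
  apply: eq_bigr => s _; rewrite -big_distrr /=; congr (_ * _).
  under eq_bigr do rewrite mxE.
  rewrite (bigA_distr_bigA (fun a l => Y a l * X l (s a))) /=.
  apply: eq_bigr => f _; rewrite big_split /=. done.
rewrite exchange_big; apply: eq_bigr => f _ /=.
rewrite big_distrr /=; apply: eq_bigr => s _.
rewrite mulrCA; congr (_ * (_ * _)).
by apply: eq_bigr => a _; rewrite !mxE.
Qed.

Definition sq (N r : nat) (al : {set 'I_N.+1}) : 'I_r -> 'I_N.+1 :=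
  fun a => nth ord0 (enum al) a.

Lemma sq_mem N r (al : {set 'I_N.+1}) (a : 'I_r) : #|al| = r -> @sq N r al a \in al.
Proof. by move=> e; rewrite /sq -mem_enum mem_nth // -cardE e. Qed.

Lemma sq_inj N r (al : {set 'I_N.+1}) : #|al| = r -> injective (@sq N r al).
Proof.
move=> e a b; rewrite /sq => /eqP; rewrite nth_uniq ?enum_uniq -?cardE ?e //.
by move/eqP/val_inj.
Qed.

Lemma sq_index N r (al : {set 'I_N.+1}) (a : 'I_r) : #|al| = r -> index (@sq N r al a) (enum al) = a.
Proof. by move=> e; rewrite /sq index_uniq ?enum_uniq // -cardE e. Qed.

Lemma sq_im N r (al : {set 'I_N.+1}) (g : 'I_r -> 'I_r) : #|al| = r -> injective g ->
  [set @sq N r al (g a) | a in [set: 'I_r]] = al.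
Proof.
move=> e ig; apply/eqP; rewrite eqEcard; apply/andP; split.
  by apply/subsetP => x /imsetP [a _ ->]; rewrite sq_mem.
rewrite card_imset ?cardsT ?card_ord ?e //.
by move=> a b /(sq_inj e)/ig.
Qed.


Definition phi N r (p : {set 'I_N.+1} * {ffun 'I_r -> 'I_r}) : {ffun 'I_r -> 'I_N.+1} :=
  [ffun a => @sq N r p.1 (p.2 a)].
Definition psi N r (f : {ffun 'I_r -> 'I_N.+1}) : {set 'I_N.+1} * {ffun 'I_r -> 'I_r} :=
  let al := [set f a | a in [set: 'I_r]] in
  (al, [ffun a => insubd a (index (f a) (enum al))]).

Lemma sum_inj_split N r (G : {ffun 'I_r -> 'I_N.+1} -> F) :
  (forall f : {ffun 'I_r -> 'I_N.+1}, ~~ injectiveb f -> G f = 0) ->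
  \sum_f G f = \sum_(al : {set 'I_N.+1} | #|al| == r)
      \sum_(g : {ffun 'I_r -> 'I_r}) G [ffun a => @sq N r al (g a)].
Proof.
move=> G0.
rewrite (bigID (fun f : {ffun 'I_r -> 'I_N.+1} => injectiveb f)) /= [X in _ + X]big1 ?addr0;
  last by move=> f /G0.
have -> : \sum_(al : {set 'I_N.+1} | #|al| == r)
      \sum_(g : {ffun 'I_r -> 'I_r}) G [ffun a => @sq N r al (g a)] =
   \sum_(al : {set 'I_N.+1} | #|al| == r)
      \sum_(g : {ffun 'I_r -> 'I_r} | injectiveb g) G (phi (al, g)).
  apply: eq_bigr => al /eqP e.
  rewrite (bigID (fun g : {ffun 'I_r -> 'I_r} => injectiveb g)) /= [X in _ + X]big1 ?addr0 //.
  move=> g ng; apply: G0; apply: contra ng => /injectiveP ip; apply/injectiveP.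
  by move=> a b eab; apply: ip; rewrite !ffunE eab.
rewrite pair_big_dep /=.
rewrite (reindex_onto (@phi N r) (@psi N r)) /=; last first.
  move=> f /injectiveP fi; apply/ffunP => a; rewrite /phi /psi !ffunE /=.
  set al := [set f x | x in [set: 'I_r]].
  have fal : f a \in al by apply: imset_f.
  have eal : #|al| = r by rewrite card_imset ?cardsT ?card_ord.
  rewrite /sq val_insubd.
  have -> : (index (f a) (enum al) < r)%N by rewrite -[X in (_ < X)%N]eal cardE index_mem mem_enum.
  by rewrite /= nth_index // mem_enum.
apply: eq_bigl => [[al g]] /=.
apply/idP/idP.
  case/andP => /injectiveP ip /eqP hp.
  have gi : injective g by move=> a b eab; apply: ip; rewrite !ffunE /= eab.
  apply/andP; split; last exact/injectiveP.
  have <- : (psi (phi (al, g))).1 = al by rewrite hp.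
  by rewrite /= card_imset ?cardsT ?card_ord.
case/andP => /eqP e /injectiveP gi.
have pi : injective (phi (al, g)).
  by move=> a b; rewrite !ffunE /= => /(sq_inj e)/gi.
rewrite (introT (injectiveP _) pi) /=; apply/eqP.
have im : [set phi (al, g) a | a in [set: 'I_r]] = al.
  rewrite -[RHS](sq_im e gi); apply: eq_in_imset => a _ /=; by rewrite ffunE.
rewrite /psi im; congr (_, _); apply/ffunP => a; rewrite !ffunE /=.
by apply: val_inj; rewrite val_insubd sq_index // ltn_ord.
Qed.


Lemma cauchy_binet N r (Y : 'M[F]_(r, N.+1)) (X : 'M[F]_(N.+1, r)) :
  \det (Y *m X) = \sum_(al : {set 'I_N.+1} | #|al| == r)
     \det (colsub (@sq N r al) Y) * \det (rowsub (@sq N r al) X).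
Proof.
rewrite det_mul_ffun (@sum_inj_split N r (fun f => (\prod_a Y a (f a)) * \det (rowsub f X))).
  apply: eq_bigr => al _; rewrite -det_mulmx det_mul_ffun.
  apply: eq_bigr => g _; congr (_ * _).
    by apply: eq_bigr => a _; rewrite !mxE ffunE.
  by congr (\det _); apply/matrixP => a b; rewrite !mxE ffunE.
move=> f /injectivePn [a1 [a2 D E]].
by rewrite (determinant_alternate D) ?mulr0 // => b; rewrite !mxE E.
Qed.


Lemma det_mxsub_cast m r N (e : m = r) (g : 'I_m -> 'I_N) (g' : 'I_r -> 'I_N)
   (M : 'M[F]_N) :
  (forall a, g a = g' (cast_ord e a)) ->
  \det (mxsub g g M) = \det (mxsub g' g' M).
Proof.
case: r / e g' => g' H; congr (\det _); apply/matrixP => a b.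
by rewrite !mxE !H !cast_ord_id.
Qed.

Lemma pminor_sq N r (M : 'M[F]_N.+1) (al : {set 'I_N.+1}) :
  #|al| = r -> pminor M al = \det (mxsub (@sq N r al) (@sq N r al) M).
Proof.
move=> e; rewrite /pminor; apply: (@det_mxsub_cast _ _ _ e) => a.
by rewrite (enum_val_nth ord0) /sq.
Qed.

Lemma sum_pminor N r (X : 'M[F]_(N.+1, r)) (Y : 'M[F]_(r, N.+1)) :
  \sum_(al : {set 'I_N.+1} | #|al| == r) pminor (X *m Y) al = \det (Y *m X).
Proof.
rewrite cauchy_binet; apply: eq_bigr => al /eqP e.
by rewrite (pminor_sq _ e) mxsub_mul det_mulmx mulrC.
Qed.


Lemma det1_rank1 s (u : 'cV[F]_s) (v : 'rV[F]_s) :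
  \det (1%:M + u *m v) = 1 + (v *m u) 0 0.
Proof.
have E1 : block_mx (1%:M + u *m v) u 0 1%:M *m block_mx 1%:M 0 (- v) 1%:M
          = block_mx 1%:M u (- v) (1%:M : 'M_1).
  rewrite mulmx_block ?mulmx1 ?mul1mx ?mulmx0 ?mul0mx ?addr0 ?add0r.
  by rewrite mulmxN addrK.
have E2 : block_mx 1%:M 0 (- v) 1%:M *m block_mx 1%:M u 0 (1%:M + v *m u)
          = block_mx 1%:M u (- v) (1%:M : 'M_1).
  rewrite mulmx_block ?mulmx1 ?mul1mx ?mulmx0 ?mul0mx ?addr0 ?add0r.
  by rewrite mulNmx addrCA addNr addr0.
have := congr1 determinant (etrans E1 (esym E2)).
rewrite !det_mulmx !det_ublock !det_lblock !det1 ?mulr1 ?mul1r.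
by move->; rewrite det_mx11 !mxE.
Qed.

Lemma det_rank1 s (M : 'M[F]_s) (u : 'cV[F]_s) (v : 'rV[F]_s) :
  M \in unitmx -> \det (M + u *m v) = \det M * (1 + (v *m invmx M *m u) 0 0).
Proof.
move=> Mu.
have -> : M + u *m v = M *m (1%:M + (invmx M *m u) *m v).
  by rewrite mulmxDr mulmx1 !mulmxA mulmxV // mul1mx.
by rewrite det_mulmx det1_rank1 mulmxA.
Qed.


Lemma det_row0 m (M : 'M[F]_m) (a0 : 'I_m) : (forall b, M a0 b = 0) -> \det M = 0.
Proof.
by move=> H; rewrite (expand_det_row _ a0) big1 // => b _; rewrite H mul0r.
Qed.

Lemma numer_split N s (X X1 : 'M[F]_(N.+1, s)) (Y : 'M[F]_(s, N.+1)) (j : 'I_N.+1) :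
  (forall a, a != j -> forall b, X1 a b = X a b) ->
  \sum_(al : {set 'I_N.+1} | (#|al| == s) && (j \in al)) pminor (X1 *m Y) al
   = \det (Y *m X1) - \det (Y *m (\matrix_(a, b) if a == j then 0 else X a b)).
Proof.
move=> HX; set Z := \matrix_(a, b) _.
rewrite -!sum_pminor.
rewrite [X in _ = X - _](bigID (fun al : {set 'I_N.+1} => j \in al)) /=.
rewrite [X in _ = _ - X](bigID (fun al : {set 'I_N.+1} => j \in al)) /=.
rewrite [X in _ = _ - (X + _)]big1 ?add0r; last first.
  move=> al /andP [_ jal]; rewrite /pminor.
  apply: (det_row0 (a0 := enum_rank_in jal j)) => b.
  rewrite !mxE enum_rankK_in //; apply: big1 => l _; by rewrite mxE eqxx mul0r.
have -> : \sum_(i : {set 'I_N.+1} | (#|i| == s) && (j \notin i)) pminor (X1 *m Y) i =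
          \sum_(i : {set 'I_N.+1} | (#|i| == s) && (j \notin i)) pminor (Z *m Y) i.
  apply: eq_bigr => al /andP [_ jal]; rewrite /pminor; congr (\det _).
  apply/matrixP => a b; rewrite !mxE; apply: eq_bigr => l _; rewrite mxE.
  have -> : (enum_val a == j) = false.
    by apply: negbTE; apply: contraNneq jal => <-; apply: enum_valP.
  by rewrite HX // ; apply: contraNneq jal => <-; apply: enum_valP.
by rewrite addrK.
Qed.


Lemma mul_row_change s m N (C : 'M[F]_(s, N)) (X X1 : 'M[F]_(N, m)) (j : 'I_N) :
  (forall a, a != j -> forall b, X1 a b = X a b) ->
  C *m X1 = C *m X + col j C *m (row j X1 - row j X).
Proof.
move=> HX; apply/matrixP => a b; rewrite !mxE (bigD1 j) //= [X in _ = X + _](bigD1 j) //=.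
rewrite big_ord1 !mxE.
have -> : \sum_(i < N | i != j) C a i * X1 i b = \sum_(i < N | i != j) C a i * X i b.
  by apply: eq_bigr => l lj; rewrite HX.
ring.
Qed.

Lemma entry3 m1 m2 m3 m4 (U : 'M[F]_(m1, m2)) (V : 'M[F]_(m2, m3)) (W : 'M[F]_(m3, m4)) i j :
  (U *m V *m W) i j = (row i U *m V *m col j W) 0 0.
Proof.
rewrite !mxE; apply: eq_bigr => l _; rewrite !mxE; congr (_ * _).
by apply: eq_bigr => x _; rewrite !mxE.
Qed.


Lemma final_part N s (P Y Q : 'M[F]_N.+1) (B : 'M[F]_(N.+1, s)) (Cm : 'M[F]_(s, N.+1))
    (i j : 'I_N.+1) :
  B *m Cm = P -> \rank P = s -> P * Y = Q -> Y * P = P * Y -> Q * P = P ->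
  Q i j =
      (\sum_(alpha : {set 'I_N.+1} | (#|alpha| == s) && (j \in alpha))
          pminor (row_repl P j (row i P)) alpha)
      / (\sum_(alpha : {set 'I_N.+1} | #|alpha| == s) pminor P alpha).
Proof.
move=> HBC HrP PY cYP QP.
set M := Cm *m B.
have YPP : P = Y *m B *m M *m Cm.
  rewrite -{1}QP -PY -cYP -HBC /M.
  by rewrite -[Y * _]/(Y *m _) -[_ * (B *m Cm)]/(_ *m (B *m Cm)) !mulmxA.
have Mu : M \in unitmx.
  rewrite -row_free_unit /row_free eqn_leq rank_leq_row /=.
  rewrite -[X in (X <= _)%N]HrP {1}YPP.
  apply: leq_trans (mxrankM_maxl _ _) _; exact: mxrankM_maxr.
have CmF : row_free Cm.
  rewrite /row_free eqn_leq rank_leq_row /= -[X in (X <= _)%N]HrP -HBC.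
  exact: mxrankM_maxr.
have YBM : Y *m B *m M = B.
  by apply: (row_free_inj CmF); rewrite -YPP HBC.
have YB : Y *m B = B *m invmx M by rewrite -[in RHS]YBM mulmxK.
have QE : Q = B *m invmx M *m Cm.
  by rewrite -PY -cYP -HBC -YB -[Y * _]/(Y *m _) mulmxA.
set B1 := \matrix_(a, b) (if a == j then B i b else B a b).
have R1 : row_repl P j (row i P) = B1 *m Cm.
  apply/matrixP => a b; rewrite /row_repl !mxE -HBC.
  case: (a =P j) => [->|na]; rewrite !mxE; apply: eq_bigr => l _; rewrite !mxE ?eqxx //.
  by rewrite (introF eqP na).
have HB1 : forall a, a != j -> forall b, B1 a b = B a b.
  by move=> a na b; rewrite mxE (negbTE na).
rewrite R1 (numer_split (X := B)) // -HBC sum_pminor -/M.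
set Z := \matrix_(a, b) (if a == j then 0 else B a b).
have HZ : forall a, a != j -> forall b, Z a b = B a b.
  by move=> a na b; rewrite mxE (negbTE na).
rewrite (mul_row_change Cm HB1) (mul_row_change Cm HZ) -/M.
have -> : row j B1 = row i B by apply/rowP => b; rewrite !mxE eqxx.
have -> : row j Z = 0 by apply/rowP => b; rewrite !mxE eqxx.
rewrite !det_rank1 // QE [LHS]entry3 sub0r !mulmxBl !mulNmx.
set w1 := row i B *m invmx M *m col j Cm.
set w2 := row j B *m invmx M *m col j Cm.
have dn : \det M != 0 by rewrite -unitfE -unitmxE.
rewrite !mxE.
by field.
Qed.

End CB.

Theorem corollary2p5 (C : numClosedFieldType) (n : nat) (A : 'M[C]_n)
    (k r : nat) (AD : 'M[C]_n) :
  is_index A k ->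
  \rank (A ^+ k.+1) = r ->
  \rank (A ^+ k) = r ->
  is_drazin_inverse A AD ->
  forall i j : 'I_n,
    (A *m AD) i j =
      (\sum_(alpha : {set 'I_n} | (#|alpha| == r) && (j \in alpha))
          pminor (row_repl (A ^+ k.+1) j (row i (A ^+ k.+1))) alpha)
      / (\sum_(alpha : {set 'I_n} | #|alpha| == r) pminor (A ^+ k.+1) alpha).
Proof.
case: n A AD => [|n] A AD; first by move=> _ _ _ _ [].
move=> Hk HrP _ [k' [Hk' [E1 [E2 E3]]]] i j.
have ek : k' = k.
  case: Hk => Hk1 Hk2; case: Hk' => Hk1' Hk2'.
  case: (ltngtP k' k) => // h.
    by have := Hk2 _ h; rewrite Hk1'.
  by have := Hk2' _ h; rewrite Hk1.
subst k' r.
set X := AD in E1 E2 E3 *.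
set P := A ^+ k.+1.
set Y := X ^+ k.+1.
set Q := A * X.
have E1' : P * X = A ^+ k := E1.
have E2' : X * A * X = X := E2.
have cAX : GRing.comm A X := E3.
have QQ : Q * Q = Q by rewrite /Q -mulrA (mulrA X A X) E2'.
have PY : P * Y = Q.
  rewrite /P /Y -exprMn_comm //; elim: (k) => [|m IH]; first by rewrite expr1.
  by rewrite exprS IH QQ.
have cYP : Y * P = P * Y.
  by apply: commr_sym; apply: commrX; apply: commr_sym; apply: commrX.
have QP : Q * P = P.
  rewrite /Q -mulrA.
  have -> : X * P = P * X by apply: commrX; apply: commr_sym.
  by rewrite E1' -exprS.
exact: (@final_part _ n _ P Y Q (col_base P) (row_base P) i j (mulmx_base P) erefl PY cYP QP).
Qed.
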